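(* Let $(H,A,C)$ be a Doi-Hopf datum in which $H$ is a Hopf algebra, and let $\nu: GF\to 1_{\mathcal C}$ be a natural transformation, where $\mathcal C={}^C\mathcal M(H)_A$. Write $\nu:=\nu_{C\otimes A}: C\otimes C\otimes A\to C\otimes A$ (here $C\otimes A=G(A)$ and $C\otimes C\otimes A=GFG(A)$). Then for all $a,b\in A$ and $c,d\in C$: (i) $\nu(c\otimes d\otimes ba)=b\cdot \nu(c\otimes d\otimes a)$, where $b\cdot(c'\otimes a')=c'\otimes ba'$; (ii) writing $\theta_{d'}:=(\varepsilon_C\otimes I_A)\nu(c\otimes d'\otimes 1_A)\in A$, one has $$\sum d_{(2)}\cdot (\theta_{d_{(1)}})_{<-1>}\otimes (\theta_{d_{(1)}})_{<0>}=\nu(c\otimes d\otimes 1_A).$$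
   Context: $k$ is a commutative ring; all (co)algebras, tensor products and maps are over $k$. Sweedler notation: $\Delta(c)=\sum c_{(1)}\otimes c_{(2)}$; for a left comodule, $\rho(m)=\sum m_{<-1>}\otimes m_{<0>}$, iterated as $\sum m_{<-2>}\otimes m_{<-1>}\otimes m_{<0>}$. A Doi-Hopf datum $(H,A,C)$ consists of a bialgebra $H$; a left $H$-comodule algebra $A$ (an algebra with a left $H$-coaction $\rho_A$ that is an algebra map); and a right $H$-module coalgebra $C$ (a coalgebra with a right $H$-action $c\cdot h$ such that $\Delta(c\cdot h)=\sum c_{(1)}\cdot h_{(1)}\otimes c_{(2)}\cdot h_{(2)}$ and $\varepsilon(c\cdot h)=\varepsilon(c)\varepsilon(h)$). $C$ is assumed flat over $k$. A Doi-Hopf module is a right $A$-module $M$ with a left $C$-coaction $\rho_M$ such that $\rho_M(ma)=\sum m_{<-1>}\cdot a_{<-1>}\otimes m_{<0>}a_{<0>}$; $\mathcal C={}^C\mathcal M(H)_A$ denotes the category of Doi-Hopf modules with $A$-linear $C$-colinear maps. $F:\mathcal C\to\mathcal M_A$ forgets the coaction; its right adjoint $G:\mathcal M_A\to\mathcal C$ is $G(N)=C\otimes N$ with $(c\otimes n)a=\sum c\cdot a_{<-1>}\otimes na_{<0>}$ and $\rho(c\otimes n)=\sum c_{(1)}\otimes c_{(2)}\otimes n$. The unit of the adjunction is $\rho_M:M\to C\otimes M$ (the coaction). In particular $C\otimes C\otimes A$ has action $(c\otimes d\otimes b)a=\sum c\cdot a_{<-2>}\otimes d\cdot a_{<-1>}\otimes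 ba_{<0>}$ and coaction $c\otimes d\otimes b\mapsto \sum c_{(1)}\otimes c_{(2)}\otimes d\otimes b$. *)

(* Defs.v *)
From HB Require Import structures.
From mathcomp Require Import all_boot all_algebra.
From mathcomp Require Import boolp.
Set Implicit Arguments. Unset Strict Implicit. Unset Printing Implicit Defensive.
Import GRing.Theory.
Local Open Scope ring_scope.
Local Open Scope quotient_scope.

Section Tensor.
Variables (R : comPzRingType) (U V : lmodType R).

Definition bilinear_map (W : lmodType R) (f : U -> V -> W) : Prop :=
  (forall v a x y, f (a *: x + y) v = a *: f x v + f y v) /\
  (forall u a x y, f u (a *: x + y) = a *: f u x + f u y).

Definition tsum (W : lmodType R) (f : U -> V -> W) (s : seq (U * V)) : W :=
  \sum_(p <- s) f p.1 p.2.

Definition teqv (s t : seq (U * V)) : bool :=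
  `[< forall (W : lmodType R) (f : U -> V -> W), bilinear_map f -> tsum f s = tsum f t >].

Lemma teqv_refl : reflexive teqv.
Proof. by move=> s; apply/asboolP. Qed.
Lemma teqv_sym : symmetric teqv.
Proof.
move=> s t; apply/asboolP/asboolP => H W f hf; exact/esym/H.
Qed.
Lemma teqv_trans : transitive teqv.
Proof.
move=> t s u /asboolP H1 /asboolP H2; apply/asboolP => W f hf.
by rewrite H1 // H2.
Qed.

Canonical teqv_equiv := EquivRel teqv teqv_refl teqv_sym teqv_trans.

Definition tensor := {eq_quot teqv}.
HB.instance Definition _ : EqQuotient _ teqv tensor := EqQuotient.on tensor.
HB.instance Definition _ := Choice.on tensor.

Lemma teqv_reprK (s : seq (U * V)) : teqv (repr (\pi_tensor s)) s.
Proof. by rewrite -eqmodE reprK. Qed.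

Lemma bil0l (W : lmodType R) (f : U -> V -> W) v : bilinear_map f -> f 0 v = 0.
Proof.
move=> [h _]; have := h v 1 0 0; rewrite !scale1r addr0 => e.
by apply: (addrI (f 0 v)); rewrite addr0 -e.
Qed.

Lemma bilNl (W : lmodType R) (f : U -> V -> W) u v : bilinear_map f -> f (- u) v = - f u v.
Proof.
move=> hf; have := hf.1 v (-1) u 0; rewrite addr0 scaleN1r => ->.
by rewrite (bil0l _ hf) addr0 scaleN1r.
Qed.

Lemma bilZl (W : lmodType R) (f : U -> V -> W) a u v : bilinear_map f -> f (a *: u) v = a *: f u v.
Proof. by move=> hf; have := hf.1 v a u 0; rewrite !addr0 (bil0l _ hf) addr0. Qed.

Lemma bilDl (W : lmodType R) (f : U -> V -> W) u u' v : bilinear_map f -> f (u + u') v = f u v + f u' v.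
Proof. by move=> hf; have := hf.1 v 1 u u'; rewrite !scale1r. Qed.

Lemma tsum_cat (W : lmodType R) (f : U -> V -> W) s t : tsum f (s ++ t) = tsum f s + tsum f t.
Proof. by rewrite /tsum big_cat. Qed.

Definition tneg (s : seq (U * V)) := map (fun p => (- p.1, p.2)) s.
Definition tscl (a : R) (s : seq (U * V)) := map (fun p => (a *: p.1, p.2)) s.

Lemma tsum_neg (W : lmodType R) (f : U -> V -> W) s : bilinear_map f -> tsum f (tneg s) = - tsum f s.
Proof.
move=> hf; rewrite /tsum big_map -sumrN; apply: eq_bigr => p _; exact: bilNl.
Qed.
Lemma tsum_scl (W : lmodType R) (f : U -> V -> W) a s : bilinear_map f -> tsum f (tscl a s) = a *: tsum f s.
Proof.
move=> hf; rewrite /tsum big_map scaler_sumr; apply: eq_bigr => p _; exact: bilZl.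
Qed.

Definition tadd := lift_op2 tensor (fun s t => s ++ t).
Lemma pi_tadd : {morph \pi_tensor : s t / s ++ t >-> tadd s t}.
Proof.
move=> s t; unlock tadd; apply/eqmodP/asboolP => W f hf.
have /asboolP h1 := teqv_reprK s; have /asboolP h2 := teqv_reprK t.
by rewrite !tsum_cat h1 ?h2.
Qed.
Canonical pi_tadd_morph := PiMorph2 pi_tadd.

Definition topp := lift_op1 tensor tneg.
Lemma pi_topp : {morph \pi_tensor : s / tneg s >-> topp s}.
Proof.
move=> s; unlock topp; apply/eqmodP/asboolP => W f hf.
have /asboolP h1 := teqv_reprK s; by rewrite !tsum_neg // h1.
Qed.
Canonical pi_topp_morph := PiMorph1 pi_topp.

Definition tzero : tensor := \pi_tensor [::].

Lemma taddA : associative tadd.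
Proof.
by elim/quotW=> x; elim/quotW=> y; elim/quotW=> z; rewrite !piE catA.
Qed.
Lemma taddC : commutative tadd.
Proof.
elim/quotW=> x; elim/quotW=> y; rewrite !piE; apply/eqmodP/asboolP => W f hf.
by rewrite !tsum_cat addrC.
Qed.
Lemma tadd0 : left_id tzero tadd.
Proof. by elim/quotW=> x; rewrite /tzero !piE. Qed.
Lemma taddN : left_inverse tzero topp tadd.
Proof.
elim/quotW=> x; rewrite /tzero !piE; apply/eqmodP/asboolP => W f hf.
by rewrite tsum_cat tsum_neg // addNr /tsum big_nil.
Qed.

HB.instance Definition _ := GRing.isZmodule.Build tensor taddA taddC tadd0 taddN.

Definition tscale (a : R) := lift_op1 tensor (tscl a).
Lemma pi_tscale a : {morph \pi_tensor : s / tscl a s >-> tscale a s}.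
Proof.
move=> s; unlock tscale; apply/eqmodP/asboolP => W f hf.
have /asboolP h1 := teqv_reprK s; by rewrite !tsum_scl // h1.
Qed.
Canonical pi_tscale_morph a := PiMorph1 (pi_tscale a).

Lemma tscaleA a b (x : tensor) : tscale a (tscale b x) = tscale (a * b) x.
Proof.
elim/quotW: x => x; rewrite !piE /tscl -map_comp; congr (\pi _).
by apply: eq_map => p /=; rewrite scalerA.
Qed.
Lemma tscale1 : left_id 1 tscale.
Proof.
elim/quotW=> x; rewrite !piE /tscl; congr (\pi _).
by rewrite -[RHS]map_id; apply: eq_map => -[u v] /=; rewrite scale1r.
Qed.
Lemma tscaleDr : right_distributive tscale (@GRing.add tensor).
Proof.
move=> a; elim/quotW=> x; elim/quotW=> y.
rewrite /GRing.add /= !piE; by rewrite /tscl map_cat.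
Qed.
Lemma tscaleDl (x : tensor) : {morph tscale^~ x : a b / a + b}.
Proof.
move=> a b; elim/quotW: x => x.
rewrite /GRing.add /= !piE; apply/eqmodP/asboolP => W f hf.
rewrite tsum_cat !tsum_scl // scalerDl //.
Qed.

HB.instance Definition _ := GRing.Zmodule_isLmodule.Build R tensor
  tscaleA tscale1 tscaleDr tscaleDl.

Definition tmul (u : U) (v : V) : tensor := \pi_tensor [:: (u, v)].

Definition tlift (W : lmodType R) (f : U -> V -> W) (x : tensor) : W :=
  tsum f (repr x).

End Tensor.

Arguments tmul {R U V}.
Arguments tlift {R U V W}.

Notation "u ⊗ v" := (tmul u v) (at level 42, right associativity) : ring_scope.

Section DoiHopf.
Variable k : comPzRingType.

Definition klinear (U V : lmodType k) (f : U -> V) : Prop :=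
  forall (a : k) x y, f (a *: x + y) = a *: f x + f y.
Definition kform (U : lmodType k) (f : U -> k) : Prop :=
  forall (a : k) x y, f (a *: x + y) = a * f x + f y.

Definition tmap (U V U' V' : lmodType k) (f : U -> U') (g : V -> V')
  (x : tensor U V) : tensor U' V' := tlift (fun u v => f u ⊗ g v) x.

Definition tensor_mul (X Y : algType k) (x y : tensor X Y) : tensor X Y :=
  tlift (fun a b => tlift (fun a' b' => (a * a') ⊗ (b * b')) y) x.

(* coalgebra (D, Delta, eps): Delta, eps linear, coassociative, counital.
   (C ⊗ C) ⊗ C is identified with C ⊗ (C ⊗ C). *)
Definition is_coalgebra (D : lmodType k) (Delta : D -> tensor D D) (eps : D -> k) : Prop :=
  ((klinear Delta) /\
     (kform eps) /\
     ((forall c, tlift (fun c1 c2 => tlift (fun x y => x ⊗ (y ⊗ c2)) (Delta c1)) (Delta c)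
                 = tlift (fun c1 c2 => c1 ⊗ Delta c2) (Delta c))) /\
     ((forall c, tlift (fun c1 c2 => eps c1 *: c2) (Delta c) = c)) /\
     ((forall c, tlift (fun c1 c2 => eps c2 *: c1) (Delta c) = c))).

Definition is_bialgebra (H : algType k) (Delta : H -> tensor H H) (eps : H -> k) : Prop :=
  ((is_coalgebra Delta eps) /\
     ((forall g h, Delta (g * h) = tensor_mul (Delta g) (Delta h))) /\
     (Delta 1 = 1 ⊗ 1) /\
     ((forall g h, eps (g * h) = eps g * eps h)) /\
     (eps 1 = 1)).

Definition is_hopf_algebra (H : algType k) (Delta : H -> tensor H H) (eps : H -> k) : Prop :=
  is_bialgebra Delta eps /\
  exists S : H -> H, ((klinear S) /\
     ((forall h, tlift (fun h1 h2 => S h1 * h2) (Delta h) = eps h *: 1)) /\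
     ((forall h, tlift (fun h1 h2 => h1 * S h2) (Delta h) = eps h *: 1))).

Definition is_comodule_algebra (H A : algType k) (Delta : H -> tensor H H) (eps : H -> k)
  (rho : A -> tensor H A) : Prop :=
  ((klinear rho) /\
     ((forall a, tlift (fun h a' => tlift (fun x y => x ⊗ (y ⊗ a')) (Delta h)) (rho a)
                 = tlift (fun h a' => h ⊗ rho a') (rho a))) /\
     ((forall a, tlift (fun h a' => eps h *: a') (rho a) = a)) /\
     ((forall a b, rho (a * b) = tensor_mul (rho a) (rho b))) /\
     (rho 1 = 1 ⊗ 1)).

Definition is_module_coalgebra (H : algType k) (Delta : H -> tensor H H) (eps : H -> k)
  (C : lmodType k) (DeltaC : C -> tensor C C) (epsC : C -> k) (act : C -> H -> C) : Prop :=
  ((is_coalgebra DeltaC epsC) /\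
     (bilinear_map act) /\
     ((forall c, act c 1 = c)) /\
     ((forall c g h, act (act c g) h = act c (g * h))) /\
     ((forall c h, DeltaC (act c h)
          = tlift (fun c1 c2 => tlift (fun h1 h2 => act c1 h1 ⊗ act c2 h2) (Delta h)) (DeltaC c))) /\
     ((forall c h, epsC (act c h) = epsC c * eps h))).

Definition flat (C : lmodType k) : Prop :=
  forall (M N : lmodType k) (f : M -> N), klinear f -> injective f ->
    injective (tmap (@id C) f).

Section DoiHopfModules.
Variables (H A : algType k) (rhoA : A -> tensor H A) (C : lmodType k)
  (DeltaC : C -> tensor C C) (epsC : C -> k) (actC : C -> H -> C).

Definition is_doi_hopf_module (M : lmodType k) (act : M -> A -> M) (co : M -> tensor C M) : Prop :=
  ((bilinear_map act) /\
     ((forall m, act m 1 = m)) /\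
     ((forall m a b, act (act m a) b = act m (a * b))) /\
     (klinear co) /\
     ((forall m, tlift (fun c m' => tlift (fun x y => x ⊗ (y ⊗ m')) (DeltaC c)) (co m)
                 = tlift (fun c m' => c ⊗ co m') (co m))) /\
     ((forall m, tlift (fun c m' => epsC c *: m') (co m) = m)) /\
     ((forall m a, co (act m a)
          = tlift (fun c m' => tlift (fun h a' => actC c h ⊗ act m' a') (rhoA a)) (co m)))).

Record dhmod := DHMod {
  dh_car : lmodType k;
  dh_act : dh_car -> A -> dh_car;
  dh_co : dh_car -> tensor C dh_car;
  dh_ax : is_doi_hopf_module dh_act dh_co }.

Definition dh_morphism (M N : dhmod) (f : dh_car M -> dh_car N) : Prop :=
  ((klinear f) /\
     ((forall m a, f (dh_act m a) = dh_act (f m) a)) /\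
     ((forall m, dh_co (f m) = tmap id f (dh_co m)))).

(* the right adjoint G : M_A -> C, G(N) = C ⊗ N *)
Definition Gact (N : lmodType k) (actN : N -> A -> N) (x : tensor C N) (a : A) : tensor C N :=
  tlift (fun c n => tlift (fun h a' => actC c h ⊗ actN n a') (rhoA a)) x.
Definition Gco (N : lmodType k) (x : tensor C N) : tensor C (tensor C N) :=
  tlift (fun c n => tlift (fun c1 c2 => c1 ⊗ (c2 ⊗ n)) (DeltaC c)) x.

Definition is_nat_trans_GF (nu : forall M : dhmod, tensor C (dh_car M) -> dh_car M) : Prop :=
  (forall M : dhmod,
     ((klinear (nu M)) /\
     ((forall x a, nu M (Gact (@dh_act M) x a) = dh_act (nu M x) a)) /\
     ((forall x, dh_co (nu M x) = tmap id (nu M) (Gco x))))) /\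
  (forall (M N : dhmod) (f : dh_car M -> dh_car N), dh_morphism f ->
     forall x, f (nu M x) = nu N (tmap id f x)).

End DoiHopfModules.
End DoiHopf.

(* Main.v *)
Require Import Defs.
From HB Require Import structures.
From mathcomp Require Import all_boot all_algebra.
From mathcomp Require Import boolp.
Import GRing.Theory.
Local Open Scope ring_scope.
Local Open Scope quotient_scope.
Set Implicit Arguments. Unset Strict Implicit. Unset Printing Implicit Defensive.

Section TensorLemmas.
Variables (R : comPzRingType) (U V : lmodType R).

Lemma tlift_pi (W : lmodType R) (f : U -> V -> W) s :
  bilinear_map f -> tlift f (\pi_(tensor U V) s) = tsum f s.
Proof. move=> hf; rewrite /tlift; have /asboolP := teqv_reprK s; apply; exact hf. Qed.

Lemma pi_cons p s : \pi_(tensor U V) (p :: s) = p.1 ⊗ p.2 + \pi_(tensor U V) s.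
Proof. rewrite /tmul; case: p => u v /=. by rewrite /GRing.add /= -pi_tadd. Qed.

Lemma pi_sum s : \pi_(tensor U V) s = \sum_(p <- s) (p.1 ⊗ p.2).
Proof. elim: s => [|p s IH]; first by rewrite big_nil. by rewrite big_cons pi_cons IH. Qed.

Lemma tensor_sum (x : tensor U V) : x = \sum_(p <- repr x) (p.1 ⊗ p.2).
Proof. by rewrite -pi_sum reprK. Qed.

Lemma bil_tmul : bilinear_map (@tmul R U V).
Proof.
split=> [v a x y|u a x y]; rewrite /tmul.
- transitivity (tadd (tscale a (\pi_(tensor U V) [:: (x, v)])) (\pi_(tensor U V) [:: (y, v)])); last by [].
  rewrite -pi_tscale -pi_tadd; apply/eqmodP/asboolP => W f hf.
  rewrite /tsum /= !big_cons !big_nil /= !addr0 hf.1 (bilZl (f:=f)) //.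
- transitivity (tadd (tscale a (\pi_(tensor U V) [:: (u, x)])) (\pi_(tensor U V) [:: (u, y)])); last by [].
  rewrite -pi_tscale -pi_tadd; apply/eqmodP/asboolP => W f hf.
  rewrite /tsum /= !big_cons !big_nil /= !addr0 hf.2 (bilZl (f:=f)) //.
Qed.

Lemma tlift_tmul (W : lmodType R) (f : U -> V -> W) u v :
  bilinear_map f -> tlift f (u ⊗ v) = f u v.
Proof. by move=> hf; rewrite /tmul tlift_pi // /tsum big_cons big_nil addr0. Qed.

Lemma tlift_add (W : lmodType R) (f : U -> V -> W) x y :
  bilinear_map f -> tlift f (x + y) = tlift f x + tlift f y.
Proof.
move=> hf; have -> : x + y = \pi_(tensor U V) (repr x ++ repr y) by rewrite pi_tadd !reprK.
by rewrite tlift_pi // tsum_cat.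
Qed.

Lemma tlift_scale (W : lmodType R) (f : U -> V -> W) a x :
  bilinear_map f -> tlift f (a *: x) = a *: tlift f x.
Proof.
move=> hf; have -> : a *: x = \pi_(tensor U V) (tscl a (repr x)) by rewrite pi_tscale !reprK.
by rewrite tlift_pi // tsum_scl.
Qed.

Lemma tlift_lin (W : lmodType R) (f : U -> V -> W) :
  bilinear_map f -> klinear (tlift f).
Proof. by move=> hf a x y; rewrite tlift_add // tlift_scale. Qed.

Lemma tensor_ext (W : zmodType) (F G : tensor U V -> W) :
  {morph F : x y / x + y} -> {morph G : x y / x + y} ->
  (forall u v, F (u ⊗ v) = G (u ⊗ v)) -> forall x, F x = G x.
Proof.
move=> hF hG e x; rewrite (tensor_sum x); elim: (repr x) => [|p s IH].
  rewrite !big_nil.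
  have h1 := hF 0 0; have h2 := hG 0 0; rewrite addr0 in h1 h2.
  have -> : F 0 = 0 by apply: (addrI (F 0)); rewrite addr0 -h1.
  by apply/esym; apply: (addrI (G 0)); rewrite addr0 -h2.
by rewrite !big_cons hF hG IH e.
Qed.

Lemma tlift_morph (W W' : lmodType R) (f : U -> V -> W) (L : W -> W') x :
  {morph L : a b / a + b} -> tlift (fun u v => L (f u v)) x = L (tlift f x).
Proof.
move=> hL; have L0 : L 0 = 0.
  have h1 := hL 0 0; rewrite addr0 in h1.
  by apply: (addrI (L 0)); rewrite addr0 -h1.
by rewrite /tlift /tsum (big_morph L hL L0).
Qed.

Lemma tlift_pw (W : lmodType R) (f g : U -> V -> W) a x :
  tlift (fun u v => a *: f u v + g u v) x = a *: tlift f x + tlift g x.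
Proof. by rewrite /tlift /tsum big_split /= scaler_sumr. Qed.

Lemma tlift_ext (W : lmodType R) (f g : U -> V -> W) x :
  (forall u v, f u v = g u v) -> tlift f x = tlift g x.
Proof. by move=> e; rewrite /tlift /tsum; apply: eq_bigr => p _; rewrite e. Qed.

Lemma klinear_add (W : lmodType R) (L : U -> W) : klinear L -> {morph L : x y / x + y}.
Proof. by move=> h x y; have := h 1 x y; rewrite !scale1r. Qed.

End TensorLemmas.

Section Swap.
Variables (R : comPzRingType) (U V U' V' W : lmodType R).
Lemma bil_comp (L1 : U -> U') (L2 : V -> V') :
  klinear L1 -> klinear L2 -> bilinear_map (fun u v => L1 u ⊗ L2 v).
Proof.
move=> h1 h2; split=> [v a x y|u a x y].
  by rewrite h1 (@bil_tmul R U' V').1.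
by rewrite h2 (@bil_tmul R U' V').2.
Qed.

Lemma tlift_swap (g : U -> V -> U' -> V' -> W) (x : tensor U V) (y : tensor U' V') :
  tlift (fun u v => tlift (g u v) y) x = tlift (fun u' v' => tlift (fun u v => g u v u' v') x) y.
Proof. by rewrite /tlift /tsum; apply: exchange_big. Qed.
End Swap.

Lemma klinear_id (R : comPzRingType) (U : lmodType R) : klinear (@id U).
Proof. by []. Qed.

Section More.
Variables (R : comPzRingType) (U V W : lmodType R).
Lemma tlift_tmul_id (x : tensor U V) : tlift tmul x = x.
Proof.
apply: (@tensor_ext R U V _ (tlift tmul) id) => //.
- by move=> a b; rewrite tlift_add //; exact: bil_tmul.
- by move=> u v; rewrite tlift_tmul //; exact: bil_tmul.
Qed.
Lemma kl_tmul_l (v : V) : klinear (fun u : U => u ⊗ v).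
Proof. by move=> a x y; rewrite (@bil_tmul R U V).1. Qed.
Lemma kl_tmul_r (u : U) : klinear (fun v : V => u ⊗ v).
Proof. by move=> a x y; rewrite (@bil_tmul R U V).2. Qed.
Lemma mk_bil (f : U -> V -> W) :
  (forall v, klinear (fun u => f u v)) -> (forall u, klinear (f u)) -> bilinear_map f.
Proof. by move=> h1 h2; split=> [v|u]; [apply: h1|apply: h2]. Qed.
Lemma tlift_param (P : lmodType R) (g : P -> U -> V -> W) (x : tensor U V) a p p' :
  (forall u v, g (a *: p + p') u v = a *: g p u v + g p' u v) ->
  tlift (g (a *: p + p')) x = a *: tlift (g p) x + tlift (g p') x.
Proof. by move=> e; rewrite -tlift_pw; apply: tlift_ext. Qed.
End More.

Lemma tlift_push (R : comPzRingType) (U V U' V' W : lmodType R) (g : U' -> V' -> W)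
  (f : U -> V -> tensor U' V') (x : tensor U V) :
  bilinear_map g -> tlift g (tlift f x) = tlift (fun u v => tlift g (f u v)) x.
Proof.
move=> hg; rewrite (@tlift_morph R U V _ _ f (tlift g) x) //.
by move=> ? ?; rewrite tlift_add.
Qed.

Lemma kl_comp (R : comPzRingType) (U V W : lmodType R) (f : V -> W) (g : U -> V) :
  klinear f -> klinear g -> klinear (fun x => f (g x)).
Proof. by move=> hf hg a x y; rewrite hg hf. Qed.

Section DH.
Variables (k : comPzRingType) (H A : algType k) (DeltaH : H -> tensor H H) (epsH : H -> k)
  (rhoA : A -> tensor H A) (C : lmodType k) (DeltaC : C -> tensor C C) (epsC : C -> k)
  (actC : C -> H -> C).
Hypothesis hA : is_comodule_algebra DeltaH epsH rhoA.
Hypothesis hC : is_module_coalgebra DeltaH epsH DeltaC epsC actC.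

Lemma rho_lin : klinear rhoA. Proof. by case: hA. Qed.
Lemma DC_lin : klinear DeltaC. Proof. by case: hC => [[]]. Qed.
Lemma actC_bil : bilinear_map actC. Proof. by case: hC => _ []. Qed.
Lemma actC_l h : klinear (fun c => actC c h). Proof. by move=> a x y; rewrite actC_bil.1. Qed.
Lemma actC_r c : klinear (actC c). Proof. by move=> a x y; rewrite actC_bil.2. Qed.

Section GN.
Variables (N : lmodType k) (actN : N -> A -> N).
Hypothesis hN1 : bilinear_map actN.
Hypothesis hN2 : forall n, actN n 1 = n.
Hypothesis hN3 : forall n a b, actN (actN n a) b = actN n (a * b).

Lemma actN_r n : klinear (actN n). Proof. by move=> a x y; rewrite hN1.2. Qed.
Lemma actN_l b : klinear (fun n => actN n b). Proof. by move=> a x y; rewrite hN1.1. Qed.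

Lemma bil_inner c n : bilinear_map (fun h a' => actC c h ⊗ actN n a').
Proof. apply: bil_comp; [exact: actC_r | exact: actN_r]. Qed.

Lemma bil_Gact a : bilinear_map (fun c n => tlift (fun h a' => actC c h ⊗ actN n a') (rhoA a)).
Proof.
apply: mk_bil => [n|c] b x y.
- apply: tlift_param (fun c h a' => actC c h ⊗ actN n a') _ _ _ _ _ => u v.
  by rewrite actC_l kl_tmul_l.
- apply: tlift_param (fun n h a' => actC c h ⊗ actN n a') _ _ _ _ _ => u v.
  by rewrite actN_l kl_tmul_r.
Qed.

Lemma Gact_l a : klinear (fun x => Gact rhoA actC actN x a).
Proof. exact: tlift_lin (bil_Gact a). Qed.

Lemma Gact_tmul c n a : Gact rhoA actC actN (c ⊗ n) a = tlift (fun h a' => actC c h ⊗ actN n a') (rhoA a).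
Proof. by rewrite /Gact tlift_tmul //; exact: bil_Gact. Qed.


Lemma Gact_add x y a : Gact rhoA actC actN (x + y) a =
  Gact rhoA actC actN x a + Gact rhoA actC actN y a.
Proof. exact: (klinear_add (Gact_l a)). Qed.

Lemma Gact_push (U V : lmodType k) (f : U -> V -> tensor C N) (z : tensor U V) b :
  Gact rhoA actC actN (tlift f z) b = tlift (fun u v => Gact rhoA actC actN (f u v) b) z.
Proof. by rewrite (@tlift_morph k U V _ _ f (fun w => Gact rhoA actC actN w b) z) //; move=> ? ?; exact: Gact_add. Qed.

Lemma Gact_assoc x a b :
  Gact rhoA actC actN (Gact rhoA actC actN x a) b = Gact rhoA actC actN x (a * b).
Proof.
move: x; apply: tensor_ext.
- by move=> x y /=; rewrite !Gact_add.
- by move=> x y /=; rewrite !Gact_add.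
move=> c n; rewrite !Gact_tmul Gact_push.
have [_ [_ [_ [hm _]]]] := hA.
have [_ [_ [_ [hCa _]]]] := hC.
rewrite hm /tensor_mul tlift_push; last exact: bil_inner.
apply: tlift_ext => h a'.
rewrite Gact_tmul tlift_push; last exact: bil_inner.
apply: tlift_ext => h' b'.
by rewrite tlift_tmul ?hCa ?hN3 //; exact: bil_inner.
Qed.

Lemma Gact_unit x : Gact rhoA actC actN x 1 = x.
Proof.
have [_ [_ [_ [_ h1]]]] := hA.
rewrite /Gact h1 -[RHS]tlift_tmul_id; apply: tlift_ext => c n.
have [_ [_ [hc1 _]]] := hC.
by rewrite tlift_tmul ?hc1 ?hN2 //; exact: bil_inner.
Qed.

Lemma Gact_bilin : bilinear_map (Gact rhoA actC actN).
Proof.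
split=> [a b x y|x b a a']; first exact: Gact_l.
rewrite /Gact; apply: tlift_param (fun a c n => tlift (fun h a' => actC c h ⊗ actN n a') (rhoA a)) _ _ _ _ _ => c n.
by rewrite rho_lin (tlift_lin (bil_inner c n)).
Qed.
End GN.

Lemma eps_form : kform epsC. Proof. by case: hC => [[_ []]]. Qed.
Lemma C_coassoc c : tlift (fun c1 c2 => tlift (fun x y => x ⊗ (y ⊗ c2)) (DeltaC c1)) (DeltaC c)
                 = tlift (fun c1 c2 => c1 ⊗ DeltaC c2) (DeltaC c).
Proof. by case: hC => [[_ [_ [h _]]]]. Qed.
Lemma C_counit c : tlift (fun c1 c2 => epsC c1 *: c2) (DeltaC c) = c.
Proof. by case: hC => [[_ [_ [_ [h _]]]]]. Qed.

Section Gco.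
Variable (N : lmodType k).

Lemma bil_x_yn (n : N) : bilinear_map (fun x y : C => x ⊗ (y ⊗ n)).
Proof. exact: (bil_comp (@klinear_id _ C) (@kl_tmul_l k C N n)). Qed.

Lemma bil_Gco : bilinear_map (fun (c : C) (n : N) => tlift (fun c1 c2 => c1 ⊗ (c2 ⊗ n)) (DeltaC c)).
Proof.
apply: mk_bil => [n|c] b x y.
- by rewrite DC_lin (tlift_lin (bil_x_yn n)).
- apply: tlift_param (fun n c1 c2 => c1 ⊗ (c2 ⊗ n)) _ _ _ _ _ => u v.
  by rewrite kl_tmul_r kl_tmul_r.
Qed.

Lemma Gco_lin : klinear (@Gco k C DeltaC N).
Proof. exact: tlift_lin bil_Gco. Qed.

Lemma Gco_tmul c (n : N) : Gco DeltaC (c ⊗ n) = tlift (fun c1 c2 => c1 ⊗ (c2 ⊗ n)) (DeltaC c).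
Proof. by rewrite /Gco tlift_tmul //; exact: bil_Gco. Qed.

Lemma Gco_push (U V : lmodType k) (f : U -> V -> tensor C N) (z : tensor U V) :
  Gco DeltaC (tlift f z) = tlift (fun u v => Gco DeltaC (f u v)) z.
Proof. by rewrite (@tlift_morph k U V _ _ f (@Gco k C DeltaC N) z) //; exact: klinear_add Gco_lin. Qed.

Lemma bil_eps (M : lmodType k) : bilinear_map (fun (c : C) (m : M) => epsC c *: m).
Proof.
split=> [v a x y|u a x y]; first by rewrite eps_form scalerDl scalerA.
by rewrite scalerDr !scalerA mulrC.
Qed.

End Gco.

Lemma Gco_counit (N : lmodType k) (m : tensor C N) : tlift (fun c m' => epsC c *: m') (Gco DeltaC m) = m.
Proof.
move: m; apply: tensor_ext.
- by move=> x y /=; rewrite (klinear_add (@Gco_lin _)) tlift_add //; exact: bil_eps.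
- by [].
move=> c n; rewrite Gco_tmul (tlift_push _ _ (bil_eps _)).
rewrite -{2}(C_counit c) -(@tlift_morph k C C _ _ _ (fun z => z ⊗ n)); last first.
  by move=> ? ?; exact: (klinear_add (@kl_tmul_l k C N n)).
apply: tlift_ext => c1 c2; rewrite tlift_tmul; last exact: bil_eps.
by rewrite (bilZl _ _ _ (@bil_tmul k C N)).
Qed.

Lemma Gco_coassoc (N : lmodType k) (m : tensor C N) :
  tlift (fun c m' => tlift (fun x y => x ⊗ (y ⊗ m')) (DeltaC c)) (Gco DeltaC m)
  = tlift (fun c m' => c ⊗ Gco DeltaC m') (Gco DeltaC m).
Proof.
have bR : bilinear_map (fun (c : C) (m' : tensor C N) => c ⊗ Gco DeltaC m').
  exact: (bil_comp (@klinear_id _ C) (@Gco_lin _)).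
move: m; apply: tensor_ext.
- by move=> x y /=; rewrite (klinear_add (@Gco_lin _)) tlift_add //; exact: bil_Gco.
- by move=> x y /=; rewrite (klinear_add (@Gco_lin _)) tlift_add.
move=> c n.
have bPhi : bilinear_map (fun (u : C) (w : tensor C C) => u ⊗ tlift (fun (y z : C) => y ⊗ (z ⊗ n)) w).
  exact: (bil_comp (@klinear_id _ C) (tlift_lin (bil_x_yn n))).
rewrite Gco_tmul (tlift_push _ _ bR).
change (tlift (fun c m' => tlift (fun x y => x ⊗ (y ⊗ m')) (DeltaC c))) with (@Gco k C DeltaC (tensor C N)).
rewrite Gco_push.
transitivity (tlift (fun (u : C) (w : tensor C C) => u ⊗ tlift (fun (y z : C) => y ⊗ (z ⊗ n)) w)
   (tlift (fun c1 c2 => tlift (fun x y => x ⊗ (y ⊗ c2)) (DeltaC c1)) (DeltaC c))).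
  rewrite (tlift_push _ _ bPhi); apply: tlift_ext => c1 c2.
  rewrite Gco_tmul (tlift_push _ _ bPhi); apply: tlift_ext => x y.
  by rewrite tlift_tmul // tlift_tmul //; exact: bil_x_yn.
rewrite C_coassoc (tlift_push _ _ bPhi); apply: tlift_ext => c1 c2.
by rewrite tlift_tmul // (tlift_tmul _ _ bR) Gco_tmul.
Qed.



Lemma A_coassoc a : tlift (fun h a' => tlift (fun x y => x ⊗ (y ⊗ a')) (DeltaH h)) (rhoA a)
                 = tlift (fun h a' => h ⊗ rhoA a') (rhoA a).
Proof. by case: hA => _ []. Qed.
Lemma DC_act c h : DeltaC (actC c h)
  = tlift (fun c1 c2 => tlift (fun h1 h2 => actC c1 h1 ⊗ actC c2 h2) (DeltaH h)) (DeltaC c).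
Proof. by case: hC => _ [_ [_ [_ [h' _]]]]. Qed.

Section GN2.
Variables (N : lmodType k) (actN : N -> A -> N).
Hypothesis hN1 : bilinear_map actN.
Hypothesis hN2 : forall n, actN n 1 = n.
Hypothesis hN3 : forall n a b, actN (actN n a) b = actN n (a * b).

Lemma Gco_Gact (m : tensor C N) a :
  Gco DeltaC (Gact rhoA actC actN m a)
  = tlift (fun c m' => tlift (fun h a' => actC c h ⊗ Gact rhoA actC actN m' a') (rhoA a)) (Gco DeltaC m).
Proof.
have bG := @Gact_bilin N actN hN1.
have bF := @bil_Gact _ _ bG a.
move: m; apply: tensor_ext.
- by move=> x y /=; rewrite (klinear_add (Gact_l hN1 a)) (klinear_add (@Gco_lin _)).
- by move=> x y /=; rewrite (klinear_add (@Gco_lin _)) tlift_add.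
move=> c n.
rewrite Gact_tmul // Gco_push Gco_tmul (tlift_push _ _ bF).
have e : forall h a', Gco DeltaC (actC c h ⊗ actN n a') =
   tlift (fun c1 c2 => tlift (fun h1 h2 => actC c1 h1 ⊗ (actC c2 h2 ⊗ actN n a')) (DeltaH h)) (DeltaC c).
  move=> h a'; rewrite Gco_tmul DC_act (tlift_push _ _ (bil_x_yn _)); apply: tlift_ext => c1 c2.
  rewrite (tlift_push _ _ (bil_x_yn _)); apply: tlift_ext => h1 h2.
  by rewrite tlift_tmul //; exact: bil_x_yn.
rewrite (tlift_ext _ e) tlift_swap; apply: tlift_ext => c1 c2.
have bPsi : bilinear_map (fun (x : H) (w : tensor H A) =>
   actC c1 x ⊗ tlift (fun y a' => actC c2 y ⊗ actN n a') w).
  exact: (bil_comp (actC_r c1) (tlift_lin (bil_inner hN1 c2 n))).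
transitivity (tlift (fun (x : H) (w : tensor H A) =>
   actC c1 x ⊗ tlift (fun y a' => actC c2 y ⊗ actN n a') w)
   (tlift (fun h a' => tlift (fun x y => x ⊗ (y ⊗ a')) (DeltaH h)) (rhoA a))).
  rewrite (tlift_push _ _ bPsi); apply: tlift_ext => h a'.
  rewrite (tlift_push _ _ bPsi); apply: tlift_ext => h1 h2.
  by rewrite tlift_tmul // tlift_tmul //; exact: bil_inner.
rewrite A_coassoc (tlift_push _ _ bPsi) tlift_tmul //.
apply: tlift_ext => h a'.
by rewrite tlift_tmul // Gact_tmul.
Qed.

Lemma G_dhm : is_doi_hopf_module rhoA DeltaC epsC actC (Gact rhoA actC actN) (@Gco _ C DeltaC N).
Proof.
split; first exact: Gact_bilin.
split; first exact: Gact_unit.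
split; first exact: Gact_assoc.
split; first exact: Gco_lin.
split; first exact: Gco_coassoc.
split; first exact: Gco_counit.
exact: Gco_Gact.
Qed.
End GN2.
End DH.

Lemma klinear_scale (R : comPzRingType) (U W : lmodType R) (L : U -> W) a x :
  klinear L -> L (a *: x) = a *: L x.
Proof.
move=> h; have hadd := klinear_add h.
have L0 : L 0 = 0.
  have h0 := hadd 0 0; rewrite addr0 in h0; by apply: (addrI (L 0)); rewrite addr0 -h0.
by have := h a x 0; rewrite addr0 L0 addr0.
Qed.

Lemma bil_mul (k : comPzRingType) (A : algType k) : bilinear_map (fun m a : A => m * a).
Proof.
split=> [v a x y|u a x y]; first by rewrite mulrDl scalerAl.
by rewrite mulrDr scalerAr.
Qed.

Unset Implicit Arguments. Set Strict Implicit.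

Theorem lemma2p1p1 (k : comPzRingType)
  (H : algType k) (DeltaH : H -> tensor H H) (epsH : H -> k)
  (A : algType k) (rhoA : A -> tensor H A)
  (C : lmodType k) (DeltaC : C -> tensor C C) (epsC : C -> k) (actC : C -> H -> C) :
  is_hopf_algebra DeltaH epsH ->
  is_comodule_algebra DeltaH epsH rhoA ->
  is_module_coalgebra DeltaH epsH DeltaC epsC actC ->
  flat C ->
  forall nu : forall M : dhmod rhoA DeltaC epsC actC, tensor C (dh_car M) -> dh_car M,
  is_nat_trans_GF nu ->
  (* G(A) = C ⊗ A as an object of ^C M(H)_A (A a right A-module by multiplication) *)
  forall hGA : is_doi_hopf_module rhoA DeltaC epsC actC
                 (Gact rhoA actC (fun m a : A => m * a)) (@Gco _ C DeltaC A),
  let nuA := nu (DHMod hGA) in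
  (* (i) *)
  (forall (a b : A) (c d : C),
     nuA (c ⊗ (d ⊗ (b * a))) = tlift (fun (c' : C) (a' : A) => c' ⊗ (b * a')) (nuA (c ⊗ (d ⊗ a)))) /\
  (* (ii) *)
  (forall c d : C,
     let theta := fun d' : C => tlift (fun (c' : C) (a' : A) => epsC c' *: a') (nuA (c ⊗ (d' ⊗ 1))) in
     tlift (fun d1 d2 : C => tlift (fun (h : H) (a' : A) => actC d2 h ⊗ a') (rhoA (theta d1))) (DeltaC d)
     = nuA (c ⊗ (d ⊗ 1))).
Proof.
move=> hH hA hC hflat nu hnu hGA nuA.
have [hnu1 hnu2] := hnu.
have hm1 := @bil_mul k A.
have hm2 : forall m : A, m * 1 = m by move=> m; rewrite mulr1.
have hm3 : forall m a b : A, m * a * b = m * (a * b) by move=> *; rewrite mulrA.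
have GT := Gact_tmul rhoA hC hm1.
have GL := Gact_l rhoA hC hm1.
have CL := @Gco_lin _ _ _ _ _ _ _ _ hC.
have CT := @Gco_tmul _ _ _ _ _ _ _ _ hC.
split.
- move=> a b c d.
  pose fb := fun x : tensor C A => tlift (fun (c' : C) (a' : A) => c' ⊗ (b * a')) x.
  have bfb : bilinear_map (fun (c' : C) (a' : A) => c' ⊗ (b * a')).
    apply: (bil_comp (@klinear_id _ C)) => x y z; exact: (bil_mul A).2.
  have lfb : klinear fb by exact: tlift_lin.
  have bid : bilinear_map (fun (u : C) (v : tensor C A) => id u ⊗ fb v).
    exact: (bil_comp (@klinear_id _ C) lfb).
  have mor : dh_morphism (M := DHMod hGA) (N := DHMod hGA) fb.
    split; first exact: lfb.
    split.
    + move=> m a0 /=; move: m; apply: tensor_ext.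
      * by move=> x y /=; rewrite (klinear_add (GL a0)) (klinear_add lfb).
      * by move=> x y /=; rewrite (klinear_add lfb) (klinear_add (GL a0)).
      move=> c' a'; rewrite /fb tlift_tmul // !GT (tlift_push _ _ bfb).
      by apply: tlift_ext => h a''; rewrite tlift_tmul // mulrA.
    + move=> m /=; move: m; apply: tensor_ext.
      * by move=> x y /=; rewrite (klinear_add lfb) (klinear_add (@CL _)).
      * by move=> x y /=; rewrite (klinear_add (@CL _)) /tmap tlift_add.
      move=> c' a'; rewrite /fb tlift_tmul // !CT /tmap (tlift_push _ _ bid).
      by apply: tlift_ext => x y; rewrite tlift_tmul // /fb tlift_tmul.
  have := @hnu2 (DHMod hGA) (DHMod hGA) fb mor (c ⊗ (d ⊗ a)).
  rewrite /= /tmap tlift_tmul // /fb tlift_tmul // => ->.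
- move=> c d theta.
  have bN1 := Gact_bilin hA hC hm1.
  have bN2 := Gact_unit hA hC hm1 hm2.
  have bN3 := Gact_assoc hA hC hm1 hm3.
  have hGN := G_dhm hA hC bN1 bN2 bN3.
  pose GN := DHMod hGN.
  have [lnuGN _] := hnu1 GN.
  have bCo : bilinear_map (fun (u : C) (v : tensor C A) => id u ⊗ Gco DeltaC v).
    exact: (bil_comp (@klinear_id _ C) (@CL _)).
  have mor1 : dh_morphism (M := DHMod hGA) (N := GN) (@Gco _ C DeltaC A).
    split; first exact: CL.
    split; first exact: (Gco_Gact hA hC hm1).
    exact: (Gco_coassoc hC).
  have mor2 : forall n : tensor C A,
     dh_morphism (M := DHMod hGA) (N := GN)
       (tlift (fun (c' : C) (a' : A) => c' ⊗ Gact rhoA actC (fun m a : A => m * a) n a')).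
    move=> n.
    have bL : bilinear_map (fun (c' : C) (a' : A) => c' ⊗ Gact rhoA actC (fun m a : A => m * a) n a').
      exact: (bil_comp (@klinear_id _ C) (fun a x y => bN1.2 n a x y)).
    have lL := tlift_lin bL.
    have bidL : bilinear_map (fun (u : C) (v : tensor C A) =>
        id u ⊗ tlift (fun (c' : C) (a' : A) => c' ⊗ Gact rhoA actC (fun m a : A => m * a) n a') v).
      exact: (bil_comp (@klinear_id _ C) lL).
    have GTN := Gact_tmul rhoA hC bN1.
    have GLN := Gact_l rhoA hC bN1.
    split; first exact: lL.
    split.
    + move=> m a0 /=; move: m; apply: tensor_ext.
      * by move=> x y /=; rewrite (klinear_add (GL a0)) (klinear_add lL).
      * by move=> x y /=; rewrite (klinear_add lL) (klinear_add (GLN a0)).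
      move=> c' a'; rewrite tlift_tmul // GT GTN (tlift_push _ _ bL).
      by apply: tlift_ext => h a''; rewrite tlift_tmul // bN3.
    + move=> m /=; move: m; apply: tensor_ext.
      * by move=> x y /=; rewrite (klinear_add lL) (klinear_add (@CL _)).
      * by move=> x y /=; rewrite (klinear_add (@CL _)) /tmap tlift_add.
      move=> c' a'; rewrite tlift_tmul // !CT /tmap (tlift_push _ _ bidL).
      by apply: tlift_ext => x y; rewrite tlift_tmul // tlift_tmul.
  have bE := bil_eps hC (tensor C A).
  have bE1 := bil_eps hC A.
  rewrite -[RHS](Gco_counit hC).
  have e1 := @hnu2 (DHMod hGA) GN _ mor1 (c ⊗ (d ⊗ 1)).
  rewrite /nuA /= in e1 *; rewrite e1 /tmap tlift_tmul // CT.
  rewrite -(@tlift_morph k C C _ _ _ (fun z => c ⊗ z) (DeltaC d)); last first.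
    by move=> ? ?; rewrite (klinear_add (@kl_tmul_r k C _ c)).
  rewrite -(@tlift_morph k C C _ _ _ (nu GN) (DeltaC d)); last exact: klinear_add lnuGN.
  rewrite (tlift_push _ _ bE); apply: tlift_ext => d1 d2.
  pose n := (d2 ⊗ (1 : A)) : tensor C A.
  have e4 : c ⊗ (d1 ⊗ (d2 ⊗ (1 : A))) =
      tmap id (tlift (fun (c' : C) (a' : A) => c' ⊗ Gact rhoA actC (fun m a : A => m * a) n a'))
        (c ⊗ (d1 ⊗ 1)).
    rewrite /tmap tlift_tmul; last exact: (bil_comp (@klinear_id _ C) (tlift_lin (bil_comp (@klinear_id _ C) (fun a x y => bN1.2 n a x y)))).
    rewrite tlift_tmul; last exact: (bil_comp (@klinear_id _ C) (fun a x y => bN1.2 n a x y)).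
    by rewrite bN2.
  rewrite e4 -(hnu2 _ _ _ (mor2 n)) /=.
  have e5 : forall z : tensor C A,
    tlift (fun (c' : C) (m' : tensor C A) => epsC c' *: m')
      (tlift (fun (c' : C) (a' : A) => c' ⊗ Gact rhoA actC (fun m a : A => m * a) n a') z)
    = Gact rhoA actC (fun m a : A => m * a) n (tlift (fun (c' : C) (a' : A) => epsC c' *: a') z).
    have bL : bilinear_map (fun (c' : C) (a' : A) => c' ⊗ Gact rhoA actC (fun m a : A => m * a) n a').
      exact: (bil_comp (@klinear_id _ C) (fun a x y => bN1.2 n a x y)).
    have lG : klinear (Gact rhoA actC (fun m a : A => m * a) n) by move=> a x y; exact: bN1.2.
    apply: tensor_ext.
    * by move=> x y /=; rewrite (klinear_add (tlift_lin bL)) tlift_add.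
    * by move=> x y /=; rewrite tlift_add // (klinear_add lG).
    move=> c' a'; rewrite !tlift_tmul //.
    by rewrite (klinear_scale _ _ lG).
  rewrite e5 /theta /n GT; apply: tlift_ext => h a'.
  by rewrite mul1r.
Qed.
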